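(* For all integers $n\ge 1$ and $q\ge 3$ there exists a quasi-complementary Hamming metric Gray code of $q$-ary $n$-tuples.
   Context: The Hamming distance between two words is the number of coordinates in which they differ. A quasi-complementary Hamming metric Gray code of $q$-ary $n$-tuples is an ordering $G(0),\ldots,G(q^n-1)$ of all words of $\mathbb{Z}_q^n$ such that consecutive words $G(i),G(i+1)$ ($0\le i<q^n-1$) have Hamming distance $1$ and $G((i+q^{n-1})\bmod q^n)=G(i)+(1,1,\ldots,1)$ for all $i$, with addition in $\mathbb{Z}_q^n$. *)

(* Defs.v *)
From mathcomp Require Import all_boot.
Set Implicit Arguments. Unset Strict Implicit. Unset Printing Implicit Defensive.

Definition word (q n : nat) := {ffun 'I_n -> 'I_q}.

Definition hamming (q n : nat) (x y : word q n) : nat := #|[set i | x i != y i]|.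

Lemma add_one_subproof (q : nat) (a : 'I_q) : (a.+1 %% q < q)%N.
Proof. by rewrite ltn_pmod // (leq_ltn_trans (leq0n a) (ltn_ord a)). Qed.

Definition add_one (q : nat) (a : 'I_q) : 'I_q := Ordinal (add_one_subproof a).

Definition add_ones (q n : nat) (x : word q n) : word q n :=
  [ffun i => add_one (x i)].

Definition quasi_compl_gray (q n : nat) (G : 'I_(q ^ n) -> word q n) : Prop :=
  bijective G /\
  (forall i j : 'I_(q ^ n), val j = (val i).+1 -> hamming (G i) (G j) = 1) /\
  (forall i j : 'I_(q ^ n), val j = (val i + q ^ n.-1) %% q ^ n ->
     G j = add_ones (G i)).

(* Main.v *)
Require Import Defs.
From mathcomp Require Import all_boot.
From mathcomp Require Import zify.

Definition injm q m N (f : nat -> nat -> nat) := forall i j, i < N -> j < N ->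
  (forall k, k < m -> f i k = f j k %[mod q]) -> i = j.

Definition graym q m N (f : nat -> nat -> nat) := forall i, i.+1 < N ->
  exists k0, [/\ k0 < m, f i k0 %% q <> f i.+1 k0 %% q &
    forall k, k < m -> k <> k0 -> f i k = f i.+1 k %[mod q]].

Definition blk m N (w : nat -> nat) (f : nat -> nat -> nat -> nat) i k :=
  if k < m then f (i %/ N) (i %% N) k else w (i %/ N).

Lemma divmod_small N b s : s < N -> (b * N + s) %/ N = b /\ (b * N + s) %% N = s.
Proof.
move=> hs; have hN : 0 < N by lia.
by rewrite divnMDl // divn_small // addn0 modnMDl modn_small.
Qed.
Arguments divmod_small {N} b {s}.

Lemma decomp N q i : i < N * q -> exists b s, [/\ b < q, s < N & i = b * N + s].
Proof.
move=> hi; have hN : 0 < N by case: N hi => //; rewrite mul0n.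
exists (i %/ N), (i %% N); split.
- by rewrite ltn_divLR // mulnC.
- by rewrite ltn_pmod.
- exact: divn_eq.
Qed.
Arguments decomp {N q i}.

Lemma modD_iff q x y t : (x + t = y + t %[mod q]) <-> (x = y %[mod q]).
Proof. by split => /eqP; [rewrite eqn_modDr | rewrite -(eqn_modDr t)] => /eqP. Qed.

Lemma blk_inj q m N w f :
  (forall b b', b < q -> b' < q -> w b = w b' %[mod q] -> b = b') ->
  (forall b, b < q -> injm q m N (f b)) -> injm q m.+1 (N * q) (blk m N w f).
Proof.
move=> hw hf i j hi hj heq.
have [bi [si [hbi hsi ei]]] := decomp hi.
have [bj [sj [hbj hsj ej]]] := decomp hj.
have [d1 m1] := divmod_small bi hsi; have [d2 m2] := divmod_small bj hsj.
have e1 := heq m (ltnSn m); rewrite /blk ltnn ei ej d1 d2 in e1.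
have ebij := hw _ _ hbi hbj e1; subst bj.
suff e : si = sj by rewrite ei ej e.
apply: (hf bi hbi) => // k hk.
have := heq k (ltnW hk); by rewrite /blk hk ei ej d1 m1 d2 m2.
Qed.

Lemma blk_gray q m N w f : 0 < N ->
  (forall b b', b < q -> b' < q -> w b = w b' %[mod q] -> b = b') ->
  (forall b, b < q -> graym q m N (f b)) ->
  (forall b, b.+1 < q -> forall k, k < m -> f b N.-1 k = f b.+1 0 k %[mod q]) ->
  graym q m.+1 (N * q) (blk m N w f).
Proof.
move=> hN hw hf hc i hi.
have [b [s [hb hs ei]]] := decomp (ltnW hi).
case: (ltnP s.+1 N) => hs1.
- have ei1 : i.+1 = b * N + s.+1 by rewrite ei addnS.
  have [d1 m1] := divmod_small b hs; have [d2 m2] := divmod_small b hs1.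
  have [k0 [hk0 hne hoth]] := hf b hb s hs1.
  exists k0; split.
  + exact: ltnW.
  + by rewrite /blk hk0 ei1 ei d1 m1 d2 m2.
  + move=> k hk hkk; rewrite /blk ei1 ei d1 m1 d2 m2.
    case: ifP => hkm //; exact: hoth.
- have es : s = N.-1 by lia.
  have ei1 : i.+1 = b.+1 * N + 0 by rewrite ei mulSn; lia.
  have hb1 : b.+1 < q by rewrite ei1 in hi; nia.
  have [d1 m1] := divmod_small b hs.
  have [d2 m2] := divmod_small b.+1 hN.
  exists m; split => //.
  + rewrite /blk ltnn ei1 ei d1 d2 => /hw h.
    by have := h hb hb1; lia.
  + move=> k hk hkm; have hkm' : k < m by lia.
    rewrite /blk hkm' ei1 ei d1 m1 d2 m2 es; exact: hc.
Qed.

Definition wd q d b := if b == 0 then 0 else if b == q.-1 then d else if b < d then b else b.+1.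
Definition ed d b := if b < d then 2 else 1.
Definition Td d b := b + minn b d.

Fixpoint P q m d i k := match m with
  | 0 => 0
  | m'.+1 => if k < m' then P q m' (ed d (i %/ q ^ m')) (i %% q ^ m') k + Td d (i %/ q ^ m')
             else wd q d (i %/ q ^ m')
  end.

Lemma wd_lt q d b : 3 <= q -> (d == 1) || (d == 2) -> b < q -> wd q d b < q.
Proof. move=> hq hd hb; rewrite /wd; case/orP: hd => /eqP ->; repeat case: ifP; lia. Qed.

Lemma wd_inj q d : 3 <= q -> (d == 1) || (d == 2) ->
  forall b b', b < q -> b' < q -> wd q d b = wd q d b' %[mod q] -> b = b'.
Proof.
move=> hq hd b b' hb hb'.
rewrite !modn_small; try exact: wd_lt.
rewrite /wd; case/orP: hd => /eqP ->; repeat case: ifP; lia.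
Qed.

Lemma ed_ok d b : (ed d b == 1) || (ed d b == 2).
Proof. by rewrite /ed; case: ifP. Qed.

Lemma P_main q m : 3 <= q -> forall d, (d == 1) || (d == 2) ->
  [/\ injm q m (q ^ m) (P q m d), graym q m (q ^ m) (P q m d),
      (forall k, k < m -> P q m d 0 k = 0 %[mod q]) &
      (forall k, k < m -> P q m d (q ^ m).-1 k = d %[mod q])].
Proof.
move=> hq; elim: m => [|m IH] d hd.
  split => //; try (by move=> i j; rewrite expn0 => hi hj _; lia);
    try (by move=> i; rewrite expn0).
have hN : 0 < q ^ m by rewrite expn_gt0; lia.
have eqf : P q m.+1 d = blk m (q ^ m) (wd q d)
   (fun b s k => P q m (ed d b) s k + Td d b) by [].
rewrite eqf expnSr; split.
- apply: blk_inj; first exact: wd_inj.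
  move=> b hb i j hi hj heq.
  have [h1 _ _ _] := IH _ (ed_ok d b).
  apply: h1 => // k hk; apply/(modD_iff _ _ _ (Td d b)); exact: heq.
- apply: blk_gray => //; first exact: wd_inj.
  + move=> b hb i hi.
    have [_ h2 _ _] := IH _ (ed_ok d b).
    have [k0 [hk0 hne hoth]] := h2 i hi.
    exists k0; split => //.
    * by move/(modD_iff _ _ _ (Td d b)).
    * by move=> k hk hkk; apply/modD_iff; exact: hoth.
  + move=> b hb k hk.
    have [_ _ _ h4] := IH _ (ed_ok d b).
    have [_ _ h3 _] := IH _ (ed_ok d b.+1).
    have -> : (P q m (ed d b) (q ^ m).-1 k + Td d b) = (ed d b + Td d b) %[mod q].
      by apply/modD_iff; exact: h4.
    have -> : (P q m (ed d b.+1) 0 k + Td d b.+1) = (0 + Td d b.+1) %[mod q].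
      by apply/modD_iff; exact: h3.
    congr (_ %% q); rewrite /ed /Td; case: ifP; lia.
- move=> k hk; rewrite /blk div0n mod0n.
  case: ifP => hkm.
  + have [_ _ h3 _] := IH _ (ed_ok d 0).
    by have := h3 k hkm; rewrite /Td min0n !addn0.
  + by rewrite /wd eqxx.
- move=> k hk.
  have ei : (q ^ m * q).-1 = q.-1 * q ^ m + (q ^ m).-1.
    move: hN; set N := q ^ m => hN'; nia.
  have hs : (q ^ m).-1 < q ^ m by lia.
  have [d1 m1] := divmod_small q.-1 hs.
  rewrite /blk ei d1 m1; case: ifP => hkm.
  + have [_ _ _ h4] := IH _ (ed_ok d q.-1).
    have -> : (P q m (ed d q.-1) (q ^ m).-1 k + Td d q.-1) = (ed d q.-1 + Td d q.-1) %[mod q].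
      by apply/modD_iff; exact: h4.
    have -> : ed d q.-1 + Td d q.-1 = d + q * 1.
      by rewrite /ed /Td; case/orP: hd => /eqP ->; case: ifP; lia.
    by rewrite muln1 modnDr.
  + rewrite /wd; have -> : (q.-1 == 0) = false by apply/eqP; lia.
    by rewrite eqxx.
Qed.

Lemma hamming1 q n (x y : word q n) (k0 : 'I_n) : x k0 != y k0 ->
  (forall k, k != k0 -> x k = y k) -> hamming x y = 1.
Proof.
move=> hne hoth; rewrite /hamming.
have -> : [set i | x i != y i] = [set k0].
  apply/setP => k; rewrite !inE.
  case: (eqVneq k k0) => [-> //|hk]; by rewrite hoth // eqxx.
by rewrite cards1.
Qed.

Theorem corollary3 (n q : nat) (hn : 1 <= n) (hq : 3 <= q) :
  exists G : 'I_(q ^ n) -> word q n, quasi_compl_gray G.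
Proof.
case: n hn => [//|m] _.
have hq0 : 0 < q by lia.
have hN : 0 < q ^ m by rewrite expn_gt0 hq0.
pose Gn := blk m (q ^ m) id (fun a r k => P q m 1 r k + a).
have [Pi Pg P0 PL] := @P_main q m hq 1 (isT : (1 == 1) || (1 == 2)).
have idinj : forall b b', b < q -> b' < q -> id b = id b' %[mod q] -> b = b'.
  by move=> b b' hb hb'; rewrite /= !modn_small.
have Ginj : injm q m.+1 (q ^ m * q) Gn.
  apply: blk_inj => // b hb i j hi hj heq.
  apply: Pi => // k hk; apply/(modD_iff _ _ _ b); exact: heq.
have Ggray : graym q m.+1 (q ^ m * q) Gn.
  apply: blk_gray => //.
  + move=> b hb i hi.
    have [k0 [hk0 hne hoth]] := Pg i hi.
    exists k0; split => //.
    * by move/(modD_iff _ _ _ b).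
    * by move=> k hk hkk; apply/modD_iff; exact: hoth.
  + move=> b hb k hk.
    have -> : (P q m 1 (q ^ m).-1 k + b) = (1 + b) %[mod q].
      by apply/modD_iff; exact: PL.
    have -> : (P q m 1 0 k + b.+1) = (0 + b.+1) %[mod q].
      by apply/modD_iff; exact: P0.
    by rewrite add0n add1n.
exists (fun i : 'I_(q ^ m.+1) => [ffun k : 'I_m.+1 => Ordinal (ltn_pmod (Gn (val i) (val k)) hq0)]).
split; [|split].
- apply: inj_card_bij; last by rewrite card_ffun !card_ord.
  move=> i1 i2 /ffunP h; apply: val_inj => /=.
  apply: Ginj; rewrite -?expnSr; try exact: ltn_ord.
  move=> k hk; have := h (Ordinal hk); rewrite !ffunE => /(congr1 val) /=; done.
- move=> i j hij.
  have hi : (val i).+1 < q ^ m * q by rewrite -hij -expnSr ltn_ord.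
  have [k0 [hk0 hne hoth]] := Ggray _ hi.
  apply: (@hamming1 _ _ _ _ (Ordinal hk0)).
  + by rewrite !ffunE; apply/eqP => /(congr1 val) /=; rewrite hij.
  + move=> k hk; rewrite !ffunE; apply: val_inj => /=; rewrite hij.
    apply: hoth => //.
    by move=> e; move: hk; rewrite -(inj_eq val_inj) /= e eqxx.
- move=> i j hij; apply/ffunP => k; rewrite !ffunE; apply: val_inj => /=.
  have hi : val i < q ^ m * q by rewrite -expnSr ltn_ord.
  have [a [r [ha hr ei]]] := decomp hi.
  have ej : val j = ((a.+1) %% q) * q ^ m + r.
    rewrite hij succnK ei expnSr.
    case: (ltnP a.+1 q) => ha1.
    + rewrite (modn_small ha1) modn_small; first by rewrite mulSn; lia.
      nia.
    + have ea : a.+1 = q by lia.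
      have -> : a * q ^ m + r + q ^ m = q ^ m * q + r by rewrite -ea mulnSr; lia.
      by rewrite modnDl modn_small ?ea ?modnn //; nia.
  have [d1 m1] := divmod_small a hr.
  have hr' := divmod_small (a.+1 %% q) hr; case: hr' => d2 m2.
  rewrite /Gn /blk ej ei d1 m1 d2 m2.
  case: ifP => _.
  + by rewrite modnDmr -[in RHS]addn1 modnDml addn1 addnS.
  + by rewrite modn_mod -[in RHS]addn1 modnDml addn1.
Qed.
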